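(* Let $d,\tilde d\in\ell^\infty(\mathbb{Z})$ be limit-periodic potentials with frequency integer sets $S_d$ and $S_{\tilde d}$ respectively. Then $\Omega_d\cong\Omega_{\tilde d}$ (as topological groups) if and only if for every $n\in S_d$ there exists $m\in S_{\tilde d}$ with $n\mid m$, and for every $m\in S_{\tilde d}$ there exists $n\in S_d$ with $m\mid n$.
   Context: $\ell^\infty(\mathbb{Z})$ carries the sup norm; $\sigma$ is the left shift, $(\sigma d)_n=d_{n+1}$. For $d\in\ell^\infty(\mathbb{Z})$, $\mathrm{orb}(d)=\{\sigma^k d: k\in\mathbb{Z}\}$ and $\Omega_d=\mathrm{hull}(d)$ is the closure of $\mathrm{orb}(d)$ in $\ell^\infty(\mathbb{Z})$. A potential $p$ is periodic if $\mathrm{orb}(p)$ is finite; $d$ is limit-periodic if it lies in the $\ell^\infty$-closure of the set of periodic potentials. For limit-periodic $d$, $\Omega_d$ is compact and carries a unique topological group structure (which is abelian) with identity $d$ such that $k\mapsto\sigma^k(d)$ is a group homomorphism $\mathbb{Z}\to\Omega_d$; isomorphisms of hulls refer to this structure. The frequency module $F_d\subset\mathbb{R}$ is the set of $\alpha\in\mathbb{R}$ such that $\sigma^k(d)\mapsto e^{ik\alpha}$ extends to a continuous character of $\Omega_d$ (equivalently, the $\mathbb{Z}$-module generated by those $\alpha$ with $\lim_{n\to\infty}\frac1{2n}\sum_{k=-n}^n d(k)e^{-ik\alpha}\neq0$). A frequency integer set of $d$ is a set $S=\{n_j\}$ of positive integers with $n_j\mid n_{j+1}$ for all $j$ such that $F_d$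 is the $\mathbb{Z}$-module generated by $\{2\pi/n_j: n_j\in S\}$. *)

(* Defs.v *)
From mathcomp Require Import all_boot all_order all_algebra.
From mathcomp Require Import all_classical all_reals all_analysis.
Set Implicit Arguments. Unset Strict Implicit. Unset Printing Implicit Defensive.
Import Order.TTheory GRing.Theory Num.Theory.
Local Open Scope ring_scope.
Local Open Scope classical_set_scope.

Section LimitPeriodic.
Variable R : realType.

Definition pot := int -> R.

Definition bounded_pot (x : pot) : Prop := exists M : R, forall n, `|x n| <= M.

Definition shift (k : int) (x : pot) : pot := fun n => x (n + k).

Definition orb (x : pot) : set pot := [set shift k x | k in [set: int]].

Definition supdist_lt (x y : pot) (e : R) : Prop :=
  exists2 r : R, r < e & forall n, `|x n - y n| <= r.

Definition periodic (p : pot) : Prop := finite_set (orb p).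

Definition limit_periodic (d : pot) : Prop :=
  bounded_pot d /\
  forall e : R, 0 < e -> exists2 p : pot, periodic p & supdist_lt d p e.

Definition hull (d : pot) : set pot :=
  [set x | bounded_pot x /\
           forall e : R, 0 < e -> exists2 y, orb d y & supdist_lt x y e].

Definition cont_on_to (A B : set pot) (f : pot -> pot) : Prop :=
  forall x, A x -> forall e : R, 0 < e -> exists2 dl : R, 0 < dl &
    forall y, A y -> supdist_lt x y dl -> supdist_lt (f x) (f y) e.

Definition cont2_on (A B : set pot) (f : pot -> pot -> pot) : Prop :=
  forall x y, A x -> A y -> forall e : R, 0 < e -> exists2 dl : R, 0 < dl &
    forall x' y', A x' -> A y' -> supdist_lt x x' dl -> supdist_lt y y' dl ->
      supdist_lt (f x y) (f x' y') e.

Definition cont_real_on (A : set pot) (f : pot -> R) : Prop :=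
  forall x, A x -> forall e : R, 0 < e -> exists2 dl : R, 0 < dl &
    forall y, A y -> supdist_lt x y dl -> `|f x - f y| < e.

Definition hull_group (d : pot) (mul : pot -> pot -> pot) (inv : pot -> pot)
  : Prop :=
  let H := hull d in
  (forall x y, H x -> H y -> H (mul x y)) /\
  (forall x, H x -> H (inv x)) /\
  (forall x y z, H x -> H y -> H z -> mul x (mul y z) = mul (mul x y) z) /\
  (forall x, H x -> mul d x = x /\ mul x d = x) /\
  (forall x, H x -> mul (inv x) x = d /\ mul x (inv x) = d) /\
  (forall j k : int, mul (shift j d) (shift k d) = shift (j + k) d) /\
  cont2_on H H mul /\
  cont_on_to H H inv.

Definition hull_iso (d d' : pot) : Prop :=
  exists mul inv mul' inv' (f g : pot -> pot),
    hull_group d mul inv /\ hull_group d' mul' inv' /\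
    (forall x, hull d x -> hull d' (f x)) /\
    (forall y, hull d' y -> hull d (g y)) /\
    (forall x, hull d x -> g (f x) = x) /\
    (forall y, hull d' y -> f (g y) = y) /\
    cont_on_to (hull d) (hull d') f /\
    cont_on_to (hull d') (hull d) g /\
    (forall x y, hull d x -> hull d y -> f (mul x y) = mul' (f x) (f y)).

(* alpha is in the frequency module: sigma^k d |-> e^{i k alpha} extends to a
   continuous character chi = c + i s of hull d *)
Definition freq_module (d : pot) (alpha : R) : Prop :=
  exists mul inv (c s : pot -> R),
    [/\ hull_group d mul inv,
        cont_real_on (hull d) c, cont_real_on (hull d) s,
        (forall x y, hull d x -> hull d y ->
           c (mul x y) = c x * c y - s x * s y /\
           s (mul x y) = s x * c y + c x * s y) &
        (forall k : int, c (shift k d) = cos (k%:~R * alpha) /\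
                         s (shift k d) = sin (k%:~R * alpha))].

Definition zspan_2pi_over (n : nat -> nat) (alpha : R) : Prop :=
  exists s : seq (int * nat),
    alpha = \sum_(p <- s) p.1%:~R * (2 * pi / (n p.2)%:R).

Definition freq_int_set (d : pot) (n : nat -> nat) : Prop :=
  [/\ forall j, (0 < n j)%N,
      forall j, (n j %| n j.+1)%N &
      forall alpha : R, freq_module d alpha <-> zspan_2pi_over n alpha].

End LimitPeriodic.

(* Main.v *)
Require Import Defs.
From mathcomp Require Import all_boot all_order all_algebra.
From mathcomp Require Import all_classical all_reals all_analysis.
From mathcomp Require Import ring lra zify.
Set Implicit Arguments. Unset Strict Implicit. Unset Printing Implicit Defensive.
Import Order.TTheory GRing.Theory Num.Theory.
Local Open Scope ring_scope.
Local Open Scope classical_set_scope.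
Local Notation sh := Defs.shift.

Section Basic.
Variable R : realType.
Implicit Types (x y z d : pot R) (e : R).

Lemma sd_sym x y e : supdist_lt x y e -> supdist_lt y x e.
Proof. by case=> r re H; exists r => // n; rewrite distrC. Qed.

Lemma sd_tri x y z e1 e2 : supdist_lt x y e1 -> supdist_lt y z e2 ->
  supdist_lt x z (e1 + e2).
Proof.
case=> r1 h1 H1 [r2 h2 H2]; exists (r1 + r2); first exact: ltrD.
move=> n; apply: le_trans (ler_distD (y n) _ _) _; exact: lerD.
Qed.

Lemma sd_le x y e e' : supdist_lt x y e -> e <= e' -> supdist_lt x y e'.
Proof. by case=> r h H le; exists r => //; exact: lt_le_trans le. Qed.

Lemma sd_refl x e : 0 < e -> supdist_lt x x e.
Proof. by move=> e0; exists 0 => // n; rewrite subrr normr0. Qed.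

Lemma sd_open x y e : supdist_lt x y e -> exists2 e', e' < e & supdist_lt x y e'.
Proof.
case=> r h H; exists ((r + e) / 2).
  by rewrite ltr_pdivrMr // mulr2n mulrDr mulr1 ltrD2r.
by exists r => //; rewrite ltr_pdivlMr // mulrDr mulr1 ltrD2l.
Qed.

Lemma sd_eq x y : (forall e, 0 < e -> supdist_lt x y e) -> x = y.
Proof.
move=> H; apply: funext => n; apply/eqP; rewrite -subr_eq0 -normr_le0.
rewrite leNgt; apply/negP => t0; case: (H _ t0) => r rt Hr.
by have := Hr n; rewrite leNgt rt.
Qed.

Lemma shift0 x : sh 0 x = x.
Proof. by apply: funext => n; rewrite /sh addr0. Qed.

Lemma shiftS (a b : int) x : sh a (sh b x) = sh (a + b) x.
Proof. by apply: funext => n; rewrite /sh addrA. Qed.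

Lemma sd_shift (a : int) x y e : supdist_lt x y e -> supdist_lt (sh a x) (sh a y) e.
Proof. by case=> r h H; exists r => // n; exact: H. Qed.

Lemma sd_shiftE (a : int) x y e : supdist_lt (sh a x) (sh a y) e <-> supdist_lt x y e.
Proof.
split; last exact: sd_shift.
move/(sd_shift (- a)); by rewrite !shiftS addNr !shift0.
Qed.

Lemma bounded_shift (k : int) x : bounded_pot x -> bounded_pot (sh k x).
Proof. by case=> M H; exists M => n; exact: H. Qed.

Lemma orb_hull d (k : int) : bounded_pot d -> hull d (sh k d).
Proof.
move=> bd; split; first exact: bounded_shift.
by move=> e e0; exists (sh k d); [exists k | exact: sd_refl].
Qed.

Lemma hull_d d : bounded_pot d -> hull d d.
Proof. by move=> bd; rewrite -{2}(shift0 d); exact: orb_hull. Qed.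

Lemma sd_orb d (a b : int) e : supdist_lt (sh a d) (sh b d) e <->
  supdist_lt d (sh (b - a) d) e.
Proof.
rewrite -(sd_shiftE (- a)) !shiftS addNr shift0 addrC; done.
Qed.

Lemma hull_approx d x e : hull d x -> 0 < e -> exists k, supdist_lt x (sh k d) e.
Proof. by case=> _ H e0; case: (H e e0) => y [k _ <-]; exists k. Qed.

Lemma fin_min (q : nat) (P : nat -> R -> Prop) :
  (forall i e e', P i e -> 0 < e' -> e' <= e -> P i e') ->
  (forall i, (i < q)%N -> exists2 e, 0 < e & P i e) ->
  exists2 e, 0 < e & forall i, (i < q)%N -> P i e.
Proof.
move=> mono; elim: q => [|q IH] H; first by exists 1.
case: IH => [i iq|e e0 He]; first by apply: H; exact: ltnW.
case: (H q (ltnSn q)) => e' e'0 He'.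
exists (Num.min e e'); first by rewrite lt_min e0.
move=> i; rewrite ltnS leq_eqVlt => /orP[/eqP->|iq].
  by apply: mono He' _ _; rewrite ?lt_min ?e0 ?e'0 ?ge_min ?lexx ?orbT.
by apply: mono (He i iq) _ _; rewrite ?lt_min ?e0 ?e'0 ?ge_min ?lexx.
Qed.

End Basic.


Section Trig.
Variable R : realType.

Lemma trig_per_nat (m : nat) (x : R) :
  cos (x + 2 * pi * m%:R) = cos x /\ sin (x + 2 * pi * m%:R) = sin x.
Proof.
have -> : 2 * pi * m%:R = (pi *+ 2) *+ m :> R by rewrite -[pi *+ 2 *+ m]mulr_natr -[pi *+ 2]mulr_natr; ring.
by split; apply: periodicn; [exact: cosD2pi | exact: sinD2pi].
Qed.

Lemma trig_per (t : int) (x : R) :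
  cos (x + 2 * pi * t%:~R) = cos x /\ sin (x + 2 * pi * t%:~R) = sin x.
Proof.
case: t => m; first exact: trig_per_nat.
set y := x + _.
have -> : x = y + 2 * pi * (m.+1)%:R.
  by rewrite /y NegzE intrN -[((m.+1)%:Z)%:~R]/((m.+1)%:R : R); ring.
by case: (trig_per_nat m.+1 y) => -> ->.
Qed.

Lemma trig_mod (r : nat) (u v : int) : (0 < r)%N -> (r%:Z %| u - v)%Z ->
  cos (2 * pi * u%:~R / r%:R) = cos (2 * pi * v%:~R / r%:R) :> R /\
  sin (2 * pi * u%:~R / r%:R) = sin (2 * pi * v%:~R / r%:R) :> R.
Proof.
move=> r0 /dvdzP [t Ht].
have -> : u = v + t * r%:Z by rewrite -Ht addrC subrK.
have r0' : (r%:R : R) != 0 by rewrite pnatr_eq0 -lt0n.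
have -> : 2 * pi * (v + t * r%:Z)%:~R / r%:R = 2 * pi * v%:~R / r%:R + 2 * pi * t%:~R :> R.
  rewrite intrD intrM /= -[(r%:Z)%:~R]/(r%:R : R).
  by field.
exact: trig_per.
Qed.

End Trig.
Arguments trig_mod {R r u v}.
Arguments trig_per {R}.

Section Zspan.
Variable R : realType.

Lemma chain_dvd (n : nat -> nat) : (forall j, (n j %| n j.+1)%N) ->
  forall i j, (i <= j)%N -> (n i %| n j)%N.
Proof.
move=> H i j /subnKC <-; elim: (j - i)%N => [|k IH]; first by rewrite addn0.
by rewrite addnS; apply: dvdn_trans IH (H _).
Qed.

Lemma zspan_int (n : nat -> nat) (alpha : R) :
  (forall j, (0 < n j)%N) -> (forall j, (n j %| n j.+1)%N) ->
  zspan_2pi_over n alpha -> exists J (B : int), alpha * (n J)%:R = 2 * pi * B%:~R.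
Proof.
move=> pos ch [s ->]; elim: s => [|p s [J' [B' HB]]].
  by exists 0%N, 0; rewrite big_nil mul0r mulr0.
rewrite big_cons.
set rest := \sum_(q <- s) _ in HB *.
exists (maxn p.2 J').
have /dvdnP [c1 E1] : (n p.2 %| n (maxn p.2 J'))%N by apply: chain_dvd; rewrite ?leq_maxl.
have /dvdnP [c2 E2] : (n J' %| n (maxn p.2 J'))%N by apply: chain_dvd; rewrite ?leq_maxr.
exists (p.1 * c1%:Z + B' * c2%:Z).
have np0 : ((n p.2)%:R : R) != 0 by rewrite pnatr_eq0 -lt0n.
rewrite mulrDl.
have -> : rest * (n (maxn p.2 J'))%:R = rest * (n J')%:R * c2%:R by rewrite E2 natrM; ring.
rewrite HB E1 natrM intrD !intrM /= -[(c1%:Z)%:~R]/(c1%:R : R) -[(c2%:Z)%:~R]/(c2%:R : R).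
by field.
Qed.

End Zspan.

Section Char.
Variable R : realType.
Implicit Types (d x y : pot R).

Lemma hg_shift0 d mul inv : hull_group d mul inv -> mul d d = d.
Proof.
case=> _ [_ [_ [_ [_ [H _]]]]].
by have := H 0 0; rewrite addr0 !shift0.
Qed.

Lemma lin_orbit d mul inv (r : nat) (a : pot R -> int) :
  bounded_pot d -> hull_group d mul inv ->
  (forall x y, hull d x -> hull d y -> (r%:Z %| a (mul x y) - (a x + a y))%Z) ->
  forall k : int, (r%:Z %| a (sh k d) - k * a (sh 1 d))%Z.
Proof.
move=> bd hg hom.
have hS : forall j k : int, mul (sh j d) (sh k d) = sh (j + k) d.
  by case: hg => _ [_ [_ [_ [_ [H _]]]]].
have a0 : (r%:Z %| a d)%Z.
  have := hom d d (hull_d bd) (hull_d bd); rewrite (hg_shift0 hg).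
  by rewrite opprD addrA subrr add0r rpredN.
have step : forall k : int, (r%:Z %| a (sh (k + 1) d) - (a (sh k d) + a (sh 1 d)))%Z.
  by move=> k; rewrite -hS; apply: hom; exact: orb_hull.
have pos : forall m : nat, (r%:Z %| a (sh m%:Z d) - m%:Z * a (sh 1 d))%Z.
  elim=> [|m IH]; first by rewrite mul0r subr0 shift0.
  have := step m%:Z; rewrite (_ : (m.+1)%:Z = m%:Z + 1); last by rewrite -addn1 PoszD.
  move=> H.
  have -> : a (sh (m%:Z + 1) d) - (m%:Z + 1) * a (sh 1 d) =
    (a (sh (m%:Z + 1) d) - (a (sh m%:Z d) + a (sh 1 d))) + (a (sh m%:Z d) - m%:Z * a (sh 1 d)) by ring.
  by rewrite rpredD.
case=> m; first exact: pos.
have H := hom _ _ (orb_hull (Negz m) bd) (orb_hull (m.+1)%:Z bd).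
rewrite hS NegzE addNr shift0 in H.
have P := pos m.+1.
have -> : a (sh (- (m.+1)%:Z) d) - - (m.+1)%:Z * a (sh 1 d) =
  - (a d - (a (sh (- (m.+1)%:Z) d) + a (sh (m.+1)%:Z d))) + a d - (a (sh (m.+1)%:Z d) - (m.+1)%:Z * a (sh 1 d)) by ring.
by rewrite rpredB // rpredD // rpredN.
Qed.

Lemma char_freq d mul inv (r : nat) (a : pot R -> int) :
  bounded_pot d -> hull_group d mul inv -> (0 < r)%N ->
  (forall x, hull d x -> exists2 dl : R, 0 < dl &
     forall y, hull d y -> supdist_lt x y dl -> (r%:Z %| a x - a y)%Z) ->
  (forall x y, hull d x -> hull d y -> (r%:Z %| a (mul x y) - (a x + a y))%Z) ->
  freq_module d (2 * pi * (a (sh 1 d))%:~R / r%:R).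
Proof.
move=> bd hg r0 loc hom.
pose th (z : int) : R := 2 * pi * z%:~R / r%:R.
have thD : forall u v, th (u + v) = th u + th v.
  by move=> u v; rewrite /th intrD; ring.
exists mul, inv, (fun x => cos (th (a x))), (fun x => sin (th (a x))); split => //.
- move=> x Hx e e0; case: (loc x Hx) => dl dl0 Hdl; exists dl => // y Hy xy.
  by rewrite (trig_mod r0 (Hdl y Hy xy)).1 subrr normr0.
- move=> x Hx e e0; case: (loc x Hx) => dl dl0 Hdl; exists dl => // y Hy xy.
  by rewrite (trig_mod r0 (Hdl y Hy xy)).2 subrr normr0.
- move=> x y Hx Hy; case: (trig_mod (R:=R) r0 (hom x y Hx Hy)) => E1 E2; rewrite /th E1 E2.
  have -> : (2 * pi * (a x + a y)%:~R / r%:R : R) = 2*pi*(a x)%:~R/r%:R + 2*pi*(a y)%:~R/r%:R.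
    by rewrite intrD; ring.
  by rewrite cosD sinD.
- move=> k; case: (trig_mod (R:=R) r0 (lin_orbit bd hg hom k)) => E1 E2; rewrite /th E1 E2.
  have -> : (2 * pi * (k * a (sh 1 d))%:~R / r%:R : R) = k%:~R * (2 * pi * (a (sh 1 d))%:~R / r%:R).
    by rewrite intrM; ring.
  by [].
Qed.

End Char.


Section Gap.
Local Close Scope classical_set_scope.
Variable R : realType.
Implicit Types (d x y p : pot R).

Lemma cos_gap (M j : nat) : (1 < M)%N -> (0 < j < M)%N ->
  cos (2 * pi * j%:R / M%:R) <= cos (2 * pi / M%:R) :> R.
Proof.
move=> M1 /andP[j0 jM].
have M0 : (0 : R) < M%:R by rewrite ltr0n (ltn_trans _ M1).
have pi0 := @pi_gt0 R.
have key : forall i : nat, (1 <= i)%N -> (i.*2 <= M)%N ->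
    cos (2 * pi * i%:R / M%:R) <= cos (2 * pi / M%:R) :> R.
  move=> i i1 i2.
  have iR : (1 : R) <= i%:R by rewrite ler1n.
  have i2R : (i%:R * 2%:R : R) <= M%:R by rewrite -natrM ler_nat muln2.
  have in1 : (2 * pi * i%:R / M%:R : R) \in `[0, pi].
    rewrite in_itv /=; apply/andP; split.
      by apply: divr_ge0; [apply: mulr_ge0; [apply: mulr_ge0 => //; exact: ltW|] | exact: ltW].
    rewrite ler_pdivrMr //; nra.
  have in2 : (2 * pi / M%:R : R) \in `[0, pi].
    rewrite in_itv /=; apply/andP; split.
      by apply: divr_ge0; [apply: mulr_ge0 => //; exact: ltW | exact: ltW].
    rewrite ler_pdivrMr //; have : (2 : R) <= M%:R by rewrite ler_nat. nra.
  rewrite leNgt (ltr_cos in1 in2) -leNgt.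
  rewrite ler_pM2r ?invr_gt0 //; nra.
case: (leqP j.*2 M) => h; first exact: key.
have -> : 2 * pi * j%:R / M%:R = - (2 * pi * (M - j)%:R / M%:R) + 2 * pi * 1%:~R :> R.
  rewrite natrB ?(ltnW jM) //; field; exact: lt0r_neq0.
rewrite (trig_per 1 _).1 cosN; apply: key; first by rewrite subn_gt0.
by move: h jM; rewrite -!muln2; lia.
Qed.

Lemma eq_int_R (u B : int) (r N : nat) : (0 < r)%N ->
  2 * pi * u%:~R / r%:R * N%:R = 2 * pi * B%:~R :> R -> u * N%:Z = B * r%:Z.
Proof.
move=> r0 E; apply: (@intr_inj R); rewrite !intrM /=.
have r0' : (r%:R : R) != 0 by rewrite pnatr_eq0 -lt0n.
have p0 : (pi : R) != 0 by rewrite gt_eqF // pi_gt0.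
rewrite -[(N%:Z)%:~R]/(N%:R : R) -[(r%:Z)%:~R]/(r%:R : R).
have q0 : (2 * pi / r%:R : R) != 0 by rewrite !mulf_neq0 // ?invr_eq0 // pnatr_eq0.
apply: (mulfI q0).
rewrite [LHS](_ : _ = 2 * pi * u%:~R / r%:R * N%:R); last by ring.
by rewrite E; field.
Qed.

Lemma gapB d (n : nat -> nat) (J : nat) : bounded_pot d -> freq_int_set d n ->
  exists2 dl : R, 0 < dl & forall k : int, supdist_lt d (sh k d) dl -> ((n J)%:Z %| k)%Z.
Proof.
move=> bd [pos ch fr].
set M := n J.
have M0 : (0 < M)%N by exact: pos.
case: (ltnP 1 M) => M1; last first.
  by exists 1 => // k _; have -> : M = 1%N by apply/eqP; rewrite eqn_leq M1 M0.
have : freq_module d (2 * pi / M%:R).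
  apply/fr; exists [:: (1, J)]; rewrite big_cons big_nil addr0 /=; ring.
case=> mul [inv [c [s [hg cc cs hom orb]]]].
have c0 : c d = 1 by have := (orb 0).1; rewrite shift0 mul0r cos0.
set a : R := 2 * pi / M%:R.
have gap : 0 < 1 - cos a.
  rewrite subr_gt0 -cos0 /a.
  have pi0 := @pi_gt0 R.
  have MR : (2 : R) <= M%:R by rewrite ler_nat.
  have in1 : (2 * pi / M%:R : R) \in `[0, pi].
    rewrite in_itv /=; apply/andP; split.
      by apply: divr_ge0; [apply: mulr_ge0 => //; exact: ltW | exact: ler0n].
    rewrite ler_pdivrMr ?(lt_le_trans _ MR) //; nra.
  have in0 : (0 : R) \in `[0, pi] by rewrite in_itv /= lexx; exact: ltW.
  rewrite (ltr_cos in0 in1) divr_gt0 // ?(lt_le_trans _ MR) //; nra.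
case: (cc d (hull_d bd) _ gap) => dl dl0 Hdl; exists dl => // k dk.
have := Hdl _ (orb_hull k bd) dk; rewrite c0 (orb k).1 => H.
have Hc : cos a < cos (k%:~R * a).
  by move: H; rewrite ltr_norml => /andP[_]; lra.
apply/dvdz_mod0P; apply/eqP; apply: contraTT Hc => jn0; rewrite -leNgt.
have Mz : (M%:Z != 0) by rewrite eqz_nat -lt0n.
have jge := modz_ge0 k Mz; have jlt := ltz_pmod k (M0 : (0 < M%:Z)).
case Ej : (k %% M%:Z)%Z jge jlt jn0 => [j|] // _ jlt jn0.
have -> : k%:~R * a = 2 * pi * j%:R / M%:R + 2 * pi * ((k %/ M%:Z)%Z)%:~R.
  rewrite {1}(divz_eq k M%:Z) Ej intrD intrM /a /= -[(M%:Z)%:~R]/(M%:R : R) -[(j%:Z)%:~R]/(j%:R : R).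
  by field; rewrite pnatr_eq0 -lt0n.
rewrite (trig_per _ _).1; apply: cos_gap => //.
by rewrite lt0n; move: jn0 jlt; rewrite ltz_nat => ->.
Qed.

Lemma sh_per p (q : nat) : sh q%:Z p = p -> forall m : int, sh (q%:Z * m) p = p.
Proof.
move=> Hq.
have pos : forall m : nat, sh (q%:Z * m%:Z) p = p.
  elim=> [|m IH]; first by rewrite mulr0 shift0.
  by rewrite -[(m.+1)%:Z]/(1 + m)%:Z PoszD mulrDr mulr1 -shiftS IH Hq.
case=> m; first exact: pos.
rewrite NegzE mulrN; have := pos m.+1 => E.
by rewrite -{1}E shiftS addNr shift0.
Qed.

Local Open Scope classical_set_scope.
Lemma periodic_q p : Defs.periodic p -> exists2 q : nat, (0 < q)%N & sh q%:Z p = p.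
Proof.
move=> fp; apply: contrapT => nq.
have inj : {in (fun i : nat => sh i%:Z p) @^-1` orb p &, injective (fun i : nat => sh i%:Z p)}.
  move=> i j _ _ /= E; case: (ltngtP i j) => // h; exfalso; apply: nq.
    exists (j - i)%N; first by rewrite subn_gt0.
    have := congr1 (sh (- i%:Z)) E; rewrite !shiftS addNr shift0 => E'.
    by rewrite {2}E'; have -> : ((j - i)%N : int) = - i%:Z + j%:Z by lia.
  exists (i - j)%N; first by rewrite subn_gt0.
  have := congr1 (sh (- j%:Z)) E; rewrite !shiftS addNr shift0 => E'.
  by have -> : ((i - j)%N : int) = - j%:Z + i%:Z by lia.
have := finite_preimage inj fp.
have -> : (fun i : nat => sh i%:Z p) @^-1` orb p = [set: nat].
  by apply/seteqP; split => // i _; exists i%:Z.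
exact: infinite_nat.
Qed.

End Gap.


Section GapA.
Variable R : realType.
Implicit Types (d x y p : pot R).

Definition Tq d (q : nat) (t : int) : Prop :=
  forall e : R, 0 < e -> exists m : int, supdist_lt d (sh (t + q%:Z * m) d) e.
Definition Cq d (q : nat) (b : int) x : Prop :=
  forall e : R, 0 < e -> exists m : int, supdist_lt x (sh (b + q%:Z * m) d) e.

Lemma half_sum (e : R) : e / 2 + e / 2 = e.
Proof. by rewrite -splitr. Qed.

Lemma T_add d q t s : Tq d q t -> Tq d q s -> Tq d q (t + s).
Proof.
move=> Ht Hs e e0; have e2 : 0 < e / 2 by rewrite divr_gt0.
case: (Ht _ e2) => m1 H1; case: (Hs _ e2) => m2 H2.
exists (m1 + m2).
have := sd_tri H1 (sd_shift (t + q%:Z * m1) H2); rewrite shiftS half_sum.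
by have -> : t + s + q%:Z * (m1 + m2) = t + q%:Z * m1 + (s + q%:Z * m2) by ring.
Qed.

Lemma T_neg d q t : Tq d q t -> Tq d q (- t).
Proof.
move=> Ht e e0; case: (Ht _ e0) => m H; exists (- m).
have := sd_sym (sd_shift (- (t + q%:Z * m)) H); rewrite shiftS addNr shift0.
by have -> : - t + q%:Z * - m = - (t + q%:Z * m) by ring.
Qed.

Lemma T_q d q z : Tq d q (q%:Z * z).
Proof.
move=> e e0; exists (- z); rewrite mulrN subrr shift0; exact: sd_refl.
Qed.

Lemma T_mul d q t : Tq d q t -> forall z, Tq d q (t * z).
Proof.
move=> Ht.
have pos : forall m : nat, Tq d q (t * m%:Z).
  elim=> [|m IH]; first by rewrite mulr0; have := T_q d q 0; rewrite mulr0.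
  by rewrite -[(m.+1)%:Z]/(1 + m)%:Z PoszD mulrDr mulr1; exact: T_add.
case=> m; first exact: pos.
rewrite NegzE mulrN; exact/T_neg/pos.
Qed.

Lemma not_C d q b x : ~ Cq d q b x ->
  exists2 e : R, 0 < e & forall m : int, ~ supdist_lt x (sh (b + q%:Z * m) d) e.
Proof.
move=> nC; apply: contrapT => H; apply: nC => e e0; apply: contrapT => nm.
by apply: H; exists e => // m Pm; apply: nm; exists m.
Qed.

Lemma gapA d (n : nat -> nat) : limit_periodic d -> freq_int_set d n ->
  forall e : R, 0 < e -> exists J, forall k : int,
    ((n J)%:Z %| k)%Z -> supdist_lt d (sh k d) e.
Proof.
move=> [bd lp] [pos ch fr] e e0.
have : freq_module d 0 by apply/fr; exists [::]; rewrite big_nil.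
case=> mul [inv [c0 [s0 [hg _ _ _ _]]]].
have hg' := hg.
case: hg' => hmul [_ [_ [_ [_ [hS [hc2 _]]]]]].
have e4 : 0 < e / 4 by rewrite divr_gt0.
case: (lp (e / 4) e4) => p pp dp.
case: (periodic_q pp) => q q0 Hq.
have Hqm : forall m, supdist_lt d (sh (q%:Z * m) d) (e / 2).
  move=> m; have := sd_shift (q%:Z * m) dp; rewrite (sh_per Hq) => H2.
  by apply: sd_le (sd_tri dp (sd_sym H2)) _; lra.
have exT : exists i, (0 < i)%N && `[< Tq d q i%:Z >].
  by exists q; rewrite q0 /=; apply/asboolP; have := T_q d q 1; rewrite mulr1.
case: (ex_minnP exT) => r /andP[r0 /asboolP Tr] rmin.
have rdvd : forall t, Tq d q t -> (r%:Z %| t)%Z.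
  move=> t Tt.
  have Tm : Tq d q (t %% r%:Z)%Z.
    have -> : (t %% r%:Z)%Z = t + r%:Z * (- (t %/ r%:Z)%Z).
      by rewrite {2}(divz_eq t r%:Z); ring.
    exact/T_add/T_mul.
  apply/dvdz_mod0P.
  have rz : r%:Z != 0 by rewrite eqz_nat -lt0n.
  have jge := modz_ge0 t rz; have jlt := ltz_pmod t (r0 : (0 < r%:Z)).
  move: Tm jge jlt; case: (t %% r%:Z)%Z => [j|j] // Tm _ jlt.
  case: j Tm jlt => [|j] // Tm jlt.
  by have := rmin j.+1; rewrite /= asboolT // => /(_ isT); rewrite leqNgt -ltz_nat jlt.
have rT : forall t, (r%:Z %| t)%Z -> Tq d q t.
  by move=> t /dvdzP [z ->]; rewrite mulrC; exact: T_mul.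
have cover : forall x, hull d x -> exists2 b : nat, (b < q)%N & Cq d q b%:Z x.
  move=> x Hx; apply: contrapT => nb.
  have : forall b, (b < q)%N -> exists2 ε : R, 0 < ε &
      (forall m : int, ~ supdist_lt x (sh (b%:Z + q%:Z * m) d) ε).
    by move=> b bq; apply: not_C => C; apply: nb; exists b.
  case/fin_min.
    by move=> i ε ε' H ε'0 le m P; apply: (H m); apply: sd_le P le.
  move=> ε ε0 Hε; case: (hull_approx Hx ε0) => k dk.
  have qz : q%:Z != 0 by rewrite eqz_nat -lt0n.
  have jge := modz_ge0 k qz; have jlt := ltz_pmod k (q0 : (0 < q%:Z)).
  move: dk; rewrite {1}(divz_eq k q%:Z).
  move: jge jlt; case: (k %% q%:Z)%Z => [b|b] // _ jlt dk.
  apply: (Hε b _ (k %/ q%:Z)%Z); first by rewrite -ltz_nat.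
  by rewrite addrC mulrC.
have consist : forall (b b' : int) x, Cq d q b x -> Cq d q b' x -> (r%:Z %| b' - b)%Z.
  move=> b b' x C C'; apply: rdvd => ε ε0.
  have e2 : 0 < ε / 2 by rewrite divr_gt0.
  case: (C _ e2) => m H; case: (C' _ e2) => m' H'.
  have := sd_tri (sd_sym H) H'; rewrite half_sum sd_orb => H2.
  exists (m' - m).
  by have -> : b' - b + q%:Z * (m' - m) = b' + q%:Z * m' - (b + q%:Z * m) by ring.
pose a := fun x => match pselect (exists b, Cq d q b x) with
  | left h => projT1 (cid h) | right _ => 0 end.
have aP : forall x, (exists b, Cq d q b x) -> Cq d q (a x) x.
  by move=> x h; rewrite /a; case: pselect => // h'; exact: (projT2 (cid h')).
have aH : forall x, hull d x -> Cq d q (a x) x.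
  by move=> x Hx; apply: aP; case: (cover x Hx) => b _ C; exists b%:Z.
have loc : forall x, hull d x -> exists2 dl : R, 0 < dl &
    forall y, hull d y -> supdist_lt x y dl -> (r%:Z %| a x - a y)%Z.
  move=> x Hx.
  have : forall b, (b < q)%N -> exists2 ε : R, 0 < ε &
      ((r%:Z %| b%:Z - a x)%Z \/ forall m : int, ~ supdist_lt x (sh (b%:Z + q%:Z * m) d) ε).
    move=> b bq; case: (boolP (r%:Z %| b%:Z - a x)%Z) => h.
      by exists 1 => //; left.
    have nC : ~ Cq d q b%:Z x by move=> C; move: h; rewrite (consist _ _ _ (aH x Hx) C).
    by case: (not_C nC) => ε ε0 Hε; exists ε => //; right.
  case/fin_min.
    move=> i ε ε' [H|H] ε'0 le; [by left | right].
    by move=> m P; apply: (H m); apply: sd_le P le.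
  move=> ε ε0 Hε; exists (ε / 2); first by rewrite divr_gt0.
  move=> y Hy dxy; case: (cover y Hy) => b bq Cb.
  have e2 : 0 < ε / 2 by rewrite divr_gt0.
  case: (Cb _ e2) => m Hm.
  have dx := sd_tri dxy Hm; rewrite half_sum in dx.
  case: (Hε b bq) => [h|h]; last by case: (h m).
  have h' := consist _ _ _ (aH y Hy) Cb.
  have -> : a x - a y = (b%:Z - a y) - (b%:Z - a x) by ring.
  by rewrite rpredB.
have hom : forall x y, hull d x -> hull d y -> (r%:Z %| a (mul x y) - (a x + a y))%Z.
  move=> x y Hx Hy.
  have C : Cq d q (a x + a y) (mul x y).
    move=> ε ε0; case: (hc2 x y Hx Hy ε ε0) => dl dl0 Hdl.
    case: (aH x Hx _ dl0) => m1 H1; case: (aH y Hy _ dl0) => m2 H2.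
    have := Hdl _ _ (orb_hull _ bd) (orb_hull _ bd) H1 H2; rewrite hS => H.
    exists (m1 + m2).
    by have -> : a x + a y + q%:Z * (m1 + m2) = a x + q%:Z * m1 + (a y + q%:Z * m2) by ring.
  exact: consist C (aH _ (hmul _ _ Hx Hy)).
have := char_freq bd hg r0 loc hom.
move/fr/(zspan_int pos ch) => [J [B HB]].
have EJ := eq_int_R r0 HB.
set u := a (sh 1 d) in EJ.
have u1 : (r%:Z %| u - 1)%Z.
  have C1 : Cq d q 1 (sh 1 d) by move=> ε ε0; exists 0; rewrite mulr0 addr0; exact: sd_refl.
  exact: consist C1 (aH _ (orb_hull _ bd)).
have rJ : (r%:Z %| (n J)%:Z)%Z.
  have -> : (n J)%:Z = u * (n J)%:Z - (u - 1) * (n J)%:Z by ring.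
  apply: rpredB; first by rewrite EJ dvdz_mull.
  exact: dvdz_mulr u1.
exists J => k hk.
case: (rT k (dvdz_trans rJ hk) _ (divr_gt0 e0 (ltr0n _ 2))) => m Hm.
have := Hqm (- m); rewrite -(sd_shiftE (k + q%:Z * m)) shiftS => H2.
have := sd_tri Hm H2; rewrite half_sum.
by have -> : k + q%:Z * m + q%:Z * - m = k by ring.
Qed.

End GapA.


Section Dir1.
Variable R : realType.
Implicit Types (d x y : pot R).

Lemma sd_minl x y (a b : R) : supdist_lt x y (Num.min a b) -> supdist_lt x y a.
Proof. by move=> H; apply: sd_le H _; rewrite ge_min lexx. Qed.
Lemma sd_minr x y (a b : R) : supdist_lt x y (Num.min a b) -> supdist_lt x y b.
Proof. by move=> H; apply: sd_le H _; rewrite ge_min lexx orbT. Qed.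

Lemma resid d mul inv (M : nat) (dl : R) :
  bounded_pot d -> hull_group d mul inv -> 0 < dl ->
  (forall k : int, supdist_lt d (sh k d) dl -> (M%:Z %| k)%Z) ->
  exists a : pot R -> int,
   [/\ forall x, hull d x -> supdist_lt x (sh (a x) d) (dl / 2),
       (forall x, hull d x -> exists2 de : R, 0 < de &
          forall y, hull d y -> supdist_lt x y de -> (M%:Z %| a x - a y)%Z) &
       (forall x y, hull d x -> hull d y -> (M%:Z %| a (mul x y) - (a x + a y))%Z)].
Proof.
move=> bd hg dl0 gap.
have dl2 : 0 < dl / 2 by rewrite divr_gt0.
have cons : forall x (k k' : int), supdist_lt x (sh k d) (dl / 2) ->
    supdist_lt x (sh k' d) (dl / 2) -> (M%:Z %| k' - k)%Z.
  move=> x k k' H H'; apply: gap.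
  by have := sd_tri (sd_sym H) H'; rewrite half_sum sd_orb.
pose a := fun x => match pselect (exists k : int, supdist_lt x (sh k d) (dl / 2)) with
  | left h => projT1 (cid h) | right _ => 0 end.
have aP : forall x, hull d x -> supdist_lt x (sh (a x) d) (dl / 2).
  move=> x Hx; rewrite /a; case: pselect => [h|h]; first exact: (projT2 (cid h)).
  by exfalso; apply: h; exact: hull_approx Hx dl2.
exists a; split => //.
- move=> x Hx; case: (sd_open (aP x Hx)) => e' e'lt He'.
  exists (dl / 2 - e'); first by rewrite subr_gt0.
  move=> y Hy xy.
  have H1 : supdist_lt y (sh (a x) d) (dl / 2).
    by have := sd_tri (sd_sym xy) He'; rewrite subrK.
  have := cons _ _ _ H1 (aP y Hy).
  by move=> h; rewrite -opprB rpredN.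
- case: hg => hmul [_ [_ [_ [_ [hS [hc2 _]]]]]].
  move=> x y Hx Hy; case: (hc2 x y Hx Hy _ dl2) => e e0 He.
  have m0 : 0 < Num.min e (dl / 2) by rewrite lt_min e0.
  case: (hull_approx Hx m0) => k1 H1; case: (hull_approx Hy m0) => k2 H2.
  have := He _ _ (orb_hull _ bd) (orb_hull _ bd) (sd_minl H1) (sd_minl H2).
  rewrite hS => H3.
  have c1 := cons _ _ _ (aP x Hx) (sd_minr H1).
  have c2 := cons _ _ _ (aP y Hy) (sd_minr H2).
  have c3 := cons _ _ _ H3 (aP _ (hmul _ _ Hx Hy)).
  have -> : a (mul x y) - (a x + a y) = (a (mul x y) - (k1 + k2)) + (k1 - a x) + (k2 - a y) by ring.
  by apply: rpredD; [apply: rpredD|].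
Qed.

Lemma dir1 d d' (n n' : nat -> nat) mul inv mul' inv' (f g : pot R -> pot R) :
  bounded_pot d -> bounded_pot d' -> freq_int_set d n -> freq_int_set d' n' ->
  hull_group d mul inv -> hull_group d' mul' inv' ->
  (forall x, hull d x -> hull d' (f x)) -> (forall y, hull d' y -> hull d (g y)) ->
  (forall x, hull d x -> g (f x) = x) -> (forall y, hull d' y -> f (g y) = y) ->
  cont_on_to (hull d') (hull d) g ->
  (forall x y, hull d x -> hull d y -> f (mul x y) = mul' (f x) (f y)) ->
  forall i, exists j, (n i %| n' j)%N.
Proof.
move=> bd bd' fis [pos' ch' fr'] hg hg' fH gH gf fg gc fhom i.
set M := n i.
have M0 : (0 < M)%N by case: fis => pos _ _; exact: pos.
case: (gapB i bd fis) => dl dl0 gap.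
case: (resid bd hg dl0 gap) => a [aP aloc ahom].
have hmul := hg.1.
have hmul' := hg'.1.
have ghom : forall x y, hull d' x -> hull d' y -> g (mul' x y) = mul (g x) (g y).
  move=> x y Hx Hy.
  have E : mul' x y = f (mul (g x) (g y)).
    by rewrite fhom; [rewrite !fg | exact: gH | exact: gH].
  by rewrite E gf //; apply: hmul; exact: gH.
pose a' := fun y => a (g y).
have loc' : forall y, hull d' y -> exists2 de : R, 0 < de &
    forall z, hull d' z -> supdist_lt y z de -> (M%:Z %| a' y - a' z)%Z.
  move=> y Hy; case: (aloc _ (gH y Hy)) => de de0 Hde.
  case: (gc y Hy de de0) => eta eta0 Heta; exists eta => // z Hz yz.
  exact: Hde (gH z Hz) (Heta z Hz yz).
have hom' : forall y z, hull d' y -> hull d' z -> (M%:Z %| a' (mul' y z) - (a' y + a' z))%Z.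
  by move=> y z Hy Hz; rewrite /a' ghom //; apply: ahom; exact: gH.
have := char_freq bd' hg' M0 loc' hom'.
move/fr'/(zspan_int pos' ch') => [J [B HB]].
have EJ := eq_int_R M0 HB.
set u := a' (sh 1 d') in EJ.
exists J; suff : (M%:Z %| (n' J)%:Z)%Z by rewrite dvdzE !absz_nat.
set Y := f (sh 1 d).
have HY : hull d' Y by apply: fH; exact: orb_hull.
case: (loc' Y HY) => eta eta0 Heta.
case: (hull_approx HY eta0) => k Hk.
have c1 := Heta _ (orb_hull _ bd') Hk.
have c2 := lin_orbit bd' hg' hom' k.
have c0 : (M%:Z %| a (sh 1 d) - 1)%Z.
  apply: gap; have H1 := aP _ (orb_hull 1 bd).
  move/sd_orb: H1 => H1; apply: sd_le H1 _; lra.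
have eY : a' Y = a (sh 1 d) by rewrite /a' /Y gf //; exact: orb_hull.
have cop : (M%:Z %| 1 - k * u)%Z.
  have -> : 1 - k * u = - (a (sh 1 d) - 1) + (a' Y - a' (sh k d')) + (a' (sh k d') - k * u).
    by rewrite eY; ring.
  by apply: rpredD; [apply: rpredD; [rewrite rpredN|]|].
have -> : (n' J)%:Z = (1 - k * u) * (n' J)%:Z + k * (u * (n' J)%:Z) by ring.
apply: rpredD; first exact: dvdz_mulr cop.
by rewrite EJ; apply: dvdz_mull; apply: dvdz_mull; exact: dvdzz.
Qed.

End Dir1.


Section Ext.
Variable R : realType.
Implicit Types (d x y : pot R).

Lemma ext d d' (del : R -> R) :
  bounded_pot d -> bounded_pot d' ->
  (forall e, 0 < e -> 0 < del e) ->
  (forall e (k : int), 0 < e -> supdist_lt d (sh k d) (del e) -> supdist_lt d' (sh k d') e) ->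
  exists F : pot R -> pot R,
   (forall x, hull d x -> hull d' (F x)) /\
   (forall e, 0 < e -> exists2 dl : R, 0 < dl & forall x (k : int), hull d x ->
       supdist_lt x (sh k d) dl -> supdist_lt (F x) (sh k d') e).
Proof.
move=> bd [B' HB'] del0 U.
pose good x e (k : int) := 0 < e /\ supdist_lt x (sh k d) (del e / 2).
have pairP : forall x e e' k k', good x e k -> good x e' k' ->
    forall n, d' (n + k) - e < d' (n + k') + e'.
  move=> x e e' k k' [e0 H] [e'0 H'] n.
  have H2 := sd_tri (sd_sym H) H'.
  have D : supdist_lt (sh k d') (sh k' d') (e + e').
    case: (leP (del e') (del e)) => le.
      have := sd_le H2 (_ : _ <= del e); rewrite sd_orb => /(_ ltac:(lra)) /(U _ _ e0).
      by rewrite -sd_orb => D; apply: sd_le D _; lra.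
    have := sd_le (sd_sym H2) (_ : _ <= del e'); rewrite sd_orb => /(_ ltac:(lra)) /(U _ _ e'0).
    by rewrite -sd_orb => D; apply: sd_le (sd_sym D) _; lra.
  case: D => r rlt Hr; have := Hr n; rewrite /Defs.shift ler_norml => /andP[h1 h2]; lra.
pose S x n := [set v : R | exists e k, good x e k /\ v = d' (n + k) - e].
pose F x := fun n => sup (S x n).
have approx : forall x e k n, hull d x -> good x e k -> `|F x n - d' (n + k)| <= e.
  move=> x e k n Hx g.
  have ne : S x n !=set0 by exists (d' (n + k) - e); exists e, k.
  have ub : ubound (S x n) (d' (n + k) + e).
    by move=> v [e1 [k1 [g1 ->]]]; apply: ltW; apply: (pairP _ _ _ _ _ g1 g).
  have le1 : F x n <= d' (n + k) + e by apply: ge_sup.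
  have le2 : d' (n + k) - e <= F x n.
    by apply: sup_upper_bound; [split => //; exists (d' (n + k) + e) | exists e, k].
  rewrite ler_norml; apply/andP; split; lra.
have F2 : forall e, 0 < e -> exists2 dl : R, 0 < dl & forall x (k : int), hull d x ->
       supdist_lt x (sh k d) dl -> supdist_lt (F x) (sh k d') e.
  move=> e e0; have e2 : 0 < e / 2 by rewrite divr_gt0.
  exists (del (e / 2) / 2); first by rewrite divr_gt0 // del0.
  move=> x k Hx xk; exists (e / 2); first lra.
  by move=> n; apply: approx => //; split.
exists F; split => //.
move=> x Hx; split.
  have d1 : 0 < del 1 / 2 by rewrite divr_gt0 // del0.
  case: (hull_approx Hx d1) => k xk.
  exists (B' + 1) => n.
  have := approx x 1 k n Hx (conj ltr01 xk).
  have := HB' (n + k); rewrite ler_norml => /andP[h1 h2].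
  rewrite !ler_norml => /andP[h3 h4]; apply/andP; split; lra.
move=> e e0; case: (F2 e e0) => dl dl0 H.
case: (hull_approx Hx dl0) => k xk.
by exists (sh k d'); [exists k | exact: H].
Qed.

End Ext.


Section Final.
Variable R : realType.
Implicit Types (d x y : pot R).

Lemma U_lemma d d' (n n' : nat -> nat) : limit_periodic d' -> bounded_pot d ->
  freq_int_set d n -> freq_int_set d' n' -> (forall j, exists i, (n' j %| n i)%N) ->
  exists del : R -> R, (forall e, 0 < e -> 0 < del e) /\
    (forall e (k : int), 0 < e -> supdist_lt d (sh k d) (del e) -> supdist_lt d' (sh k d') e).
Proof.
move=> lp' bd fis fis' div.
have H : forall e : R, exists de : R, 0 < e -> 0 < de /\
    forall k : int, supdist_lt d (sh k d) de -> supdist_lt d' (sh k d') e.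
  move=> e; case: (boolP (0 < e)) => e0; last by exists 1.
  case: (gapA lp' fis' e0) => J' HJ'; case: (div J') => i hi.
  case: (gapB i bd fis) => de de0 Hde; exists de => _; split => // k hk.
  apply: HJ'; apply: dvdz_trans (Hde k hk); by rewrite dvdzE !absz_nat.
case: (choice H) => del Hdel; exists del; split.
  by move=> e e0; exact: (Hdel e e0).1.
by move=> e k e0; exact: (Hdel e e0).2.
Qed.

Lemma ext_props d d' (F : pot R -> pot R) : bounded_pot d ->
  (forall x, hull d x -> hull d' (F x)) ->
  (forall e, 0 < e -> exists2 dl : R, 0 < dl & forall x (k : int), hull d x ->
       supdist_lt x (sh k d) dl -> supdist_lt (F x) (sh k d') e) ->
  (forall k : int, F (sh k d) = sh k d') /\
  (forall e, 0 < e -> exists2 dl : R, 0 < dl & forall x y, hull d x -> hull d y ->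
       supdist_lt x y dl -> supdist_lt (F x) (F y) e).
Proof.
move=> bd F1 F2; split.
  move=> k; apply: sd_eq => e e0; case: (F2 e e0) => dl dl0 H.
  by apply: H; [exact: orb_hull | exact: sd_refl].
move=> e e0; have e2 : 0 < e / 2 by rewrite divr_gt0.
case: (F2 _ e2) => dl dl0 H; exists (dl / 2); first by rewrite divr_gt0.
move=> x y Hx Hy xy; have d2 : 0 < dl / 2 by rewrite divr_gt0.
case: (hull_approx Hx d2) => k xk.
have yk : supdist_lt y (sh k d) dl by have := sd_tri (sd_sym xy) xk; rewrite half_sum.
have xk' : supdist_lt x (sh k d) dl by apply: sd_le xk _; lra.
have := sd_tri (H _ _ Hx xk') (sd_sym (H _ _ Hy yk)); by rewrite half_sum.
Qed.

Lemma inv_hom d d' mul mul' (f g : pot R -> pot R) :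
  hull_group d mul (fun x => x) \/ True ->
  (forall x y, hull d x -> hull d y -> hull d (mul x y)) ->
  (forall y, hull d' y -> hull d (g y)) ->
  (forall x, hull d x -> g (f x) = x) -> (forall y, hull d' y -> f (g y) = y) ->
  (forall x y, hull d x -> hull d y -> f (mul x y) = mul' (f x) (f y)) ->
  forall x y, hull d' x -> hull d' y -> g (mul' x y) = mul (g x) (g y).
Proof.
move=> _ hmul gH gf fg fhom x y Hx Hy.
have E : mul' x y = f (mul (g x) (g y)).
  by rewrite fhom; [rewrite !fg | exact: gH | exact: gH].
by rewrite E gf //; apply: hmul; exact: gH.
Qed.

Lemma dir2 d d' (n n' : nat -> nat) : limit_periodic d -> limit_periodic d' ->
  freq_int_set d n -> freq_int_set d' n' ->
  (forall i, exists j, (n i %| n' j)%N) -> (forall j, exists i, (n' j %| n i)%N) ->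
  hull_iso d d'.
Proof.
move=> lp lp' fis fis' div1 div2.
have [bd _] := lp; have [bd' _] := lp'.
have [_ _ fr] := fis; have [_ _ fr'] := fis'.
have : freq_module d 0 by apply/fr; exists [::]; rewrite big_nil.
case=> mul [inv [c0 [s0 [hg _ _ _ _]]]].
have : freq_module d' 0 by apply/fr'; exists [::]; rewrite big_nil.
case=> mul' [inv' [c0' [s0' [hg' _ _ _ _]]]].
case: (U_lemma lp' bd fis fis' div2) => del [del0 U].
case: (U_lemma lp bd' fis' fis div1) => del' [del0' U'].
case: (ext bd bd' del0 U) => F [F1 F2].
case: (ext bd' bd del0' U') => G [G1 G2].
case: (ext_props bd F1 F2) => FE FU.
case: (ext_props bd' G1 G2) => GE GU.
have GF : forall x, hull d x -> G (F x) = x.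
  move=> x Hx; apply: sd_eq => e e0; have e2 : 0 < e / 2 by rewrite divr_gt0.
  case: (GU _ e2) => eta eta0 Heta; case: (F2 _ eta0) => dF dF0 HdF.
  have m0 : 0 < Num.min dF (e / 2) by rewrite lt_min dF0.
  case: (hull_approx Hx m0) => k xk.
  have := Heta _ _ (F1 x Hx) (orb_hull k bd') (HdF _ _ Hx (sd_minl xk)); rewrite GE => H.
  by have := sd_tri H (sd_sym (sd_minr xk)); rewrite half_sum.
have FG : forall y, hull d' y -> F (G y) = y.
  move=> x Hx; apply: sd_eq => e e0; have e2 : 0 < e / 2 by rewrite divr_gt0.
  case: (FU _ e2) => eta eta0 Heta; case: (G2 _ eta0) => dF dF0 HdF.
  have m0 : 0 < Num.min dF (e / 2) by rewrite lt_min dF0.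
  case: (hull_approx Hx m0) => k xk.
  have := Heta _ _ (G1 x Hx) (orb_hull k bd) (HdF _ _ Hx (sd_minl xk)); rewrite FE => H.
  by have := sd_tri H (sd_sym (sd_minr xk)); rewrite half_sum.
have hg0 := hg; have hg0' := hg'.
case: hg0 => hmul [_ [_ [_ [_ [hS [hc2 _]]]]]].
case: hg0' => hmul' [_ [_ [_ [_ [hS' [hc2' _]]]]]].
exists mul, inv, mul', inv', F, G.
do 6 (split => //).
split.
  move=> x Hx e e0; case: (FU e e0) => dl dl0 H; exists dl => // y Hy; exact: H.
split.
  move=> x Hx e e0; case: (GU e e0) => dl dl0 H; exists dl => // y Hy; exact: H.
move=> x y Hx Hy; apply: sd_eq => e e0; have e2 : 0 < e / 2 by rewrite divr_gt0.
case: (hc2' _ _ (F1 x Hx) (F1 y Hy) _ e2) => eta eta0 Heta.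
case: (F2 _ eta0) => d1 d10 H1.
case: (FU _ e2) => d3 d30 H3.
case: (hc2 _ _ Hx Hy _ d30) => eta2 eta20 Heta2.
have m0 : 0 < Num.min d1 eta2 by rewrite lt_min d10.
case: (hull_approx Hx m0) => k xk; case: (hull_approx Hy m0) => l yl.
have A := Heta _ _ (orb_hull k bd') (orb_hull l bd') (H1 _ _ Hx (sd_minl xk))
  (H1 _ _ Hy (sd_minl yl)).
rewrite hS' in A.
have B := Heta2 _ _ (orb_hull k bd) (orb_hull l bd) (sd_minr xk) (sd_minr yl).
rewrite hS in B.
have C := H3 _ _ (hmul _ _ Hx Hy) (orb_hull _ bd) B.
rewrite FE in C.
by have := sd_tri C (sd_sym A); rewrite half_sum.
Qed.

End Final.

Local Close Scope classical_set_scope.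
Local Close Scope ring_scope.
Theorem theorem2p10 (R : realType) (d d' : int -> R) (n n' : nat -> nat) :
  limit_periodic d -> limit_periodic d' ->
  freq_int_set d n -> freq_int_set d' n' ->
  (hull_iso d d' <->
   ((forall i, exists j, (n i %| n' j)%N) /\
    (forall j, exists i, (n' j %| n i)%N))).
Proof.
move=> lp lp' fis fis'; split; last by case=> h1 h2; exact: (dir2 lp lp' fis fis' h1 h2).
case=> mul [inv [mul' [inv' [f [g [hg [hg' [fH [gH [gf [fg [fc [gc fhom]]]]]]]]]]]]].
have [bd _] := lp; have [bd' _] := lp'.
split; first exact: (dir1 bd bd' fis fis' hg hg' fH gH gf fg gc fhom).
have [hmul _] := hg.
have ghom := inv_hom (or_intror I) hmul gH gf fg fhom.
exact: (dir1 bd' bd fis' fis hg' hg gH fH fg gf fc ghom).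
Qed.
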